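(* Let $A$ be a closed type of system $\mathcal F$ not containing the type constant $O$. If $A$ is a data type, then $A$ is an output type.
   Context: $\lambda$-terms are those of the untyped $\lambda$-calculus ($\Lambda$ their set); $Fv(t)$ the free variables; $\rightarrow_\beta$ is (multi-step) $\beta$-reduction; normal means without $\beta$-redex; $u\succ_f v$ means $v$ is obtained from $u$ by weak head reduction (repeatedly reducing the redex $(\lambda x u)v$ in a term $(\lambda x u)vv_1\dots v_m$). Types of system $\mathcal F$: built from type variables and type constants (atomic, not quantifiable; $O$ is one) with $\rightarrow$, $\forall$; only proper types (in every $\forall XA$, $X$ occurs free in $A$). Typing: (ax) $\Gamma \vdash x_i : A_i$ for $x_i:A_i\in\Gamma$; ($\rightarrow_i$) from $\Gamma, x:B \vdash t : C$ infer $\Gamma \vdash \lambda x t : B \rightarrow C$; ($\rightarrow_e$) from $\Gamma \vdash u : B\rightarrow C$, $\Gamma \vdash v : B$ infer $\Gamma \vdash (u)v : C$; ($\forall_i$) from $\Gamma \vdash t : A$, $X$ not free in $\Gamma$, infer $\Gamma \vdash t : \forall X A$; ($\forall_e$) from $\Gamma \vdash t : \forall X A$ infer $\Gamma \vdash t : A[C/X]$. A set $G\subseteq\Lambda$ is saturated if $u\in G$ and $t\succ_f u$ imply $t\in G$. For $G,G'\subseteq\Lambda$, $G\rightarrow G'=\{u : (u)t\in G' \text{ for all } t\in G\}$. An interpretation $I$ maps each type variable and type constant to a saturated set; $|A|_I$ is defined by $|A\rightarrow B|_I=|A|_I\rightarrow|B|_I$ and $|\forall XA|_I=\bigcap\{|A|_{I[X\leftarrow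 G]} : G \text{ saturated}\}$, and $|A|=\bigcap_I |A|_I$. A closed type $A$ is a data type if $|A|\neq\emptyset$ and every $t\in|A|$ $\beta$-reduces to a closed term. An output type is a closed type $S$ not containing $O$ such that for every normal $t$ and variable $\alpha$, $\alpha:O\vdash_{\mathcal F}t:S$ implies $\alpha\notin Fv(t)$. *)

(* Defs.v *)
From Stdlib Require Import List Arith Relations.
Import ListNotations.

Inductive term : Type :=
| Var : nat -> term
| App : term -> term -> term
| Lam : term -> term.

Fixpoint lift_by (n c : nat) (t : term) : term :=
  match t with
  | Var i => if Nat.ltb i c then Var i else Var (i + n)
  | App a b => App (lift_by n c a) (lift_by n c b)
  | Lam a => Lam (lift_by n (S c) a)
  end.

Fixpoint subst (k : nat) (u : term) (t : term) : term :=
  match t with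
  | Var i => if Nat.ltb i k then Var i
             else if Nat.eqb i k then lift_by k 0 u
             else Var (pred i)
  | App a b => App (subst k u a) (subst k u b)
  | Lam a => Lam (subst (S k) u a)
  end.

Fixpoint occurs (k : nat) (t : term) : Prop :=
  match t with
  | Var i => i = k
  | App a b => occurs k a \/ occurs k b
  | Lam a => occurs (S k) a
  end.

Definition closed_term (t : term) : Prop := forall k, ~ occurs k t.

Inductive beta1 : term -> term -> Prop :=
| beta_redex : forall t u, beta1 (App (Lam t) u) (subst 0 u t)
| beta_appl : forall a a' b, beta1 a a' -> beta1 (App a b) (App a' b)
| beta_appr : forall a b b', beta1 b b' -> beta1 (App a b) (App a b')
| beta_lam : forall a a', beta1 a a' -> beta1 (Lam a) (Lam a').

Definition beta_star : term -> term -> Prop := clos_refl_trans term beta1.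

Fixpoint has_redex (t : term) : Prop :=
  match t with
  | Var _ => False
  | App (Lam a) b => True
  | App a b => has_redex a \/ has_redex b
  | Lam a => has_redex a
  end.

Definition normal (t : term) : Prop := ~ has_redex t.

Inductive wh1 : term -> term -> Prop :=
| wh_redex : forall u v, wh1 (App (Lam u) v) (subst 0 v u)
| wh_app : forall t t' w, wh1 t t' -> wh1 (App t w) (App t' w).

Definition wh_red : term -> term -> Prop := clos_refl_trans term wh1.

Inductive ty : Type :=
| TVar : nat -> ty
| TConst : nat -> ty
| Arr : ty -> ty -> ty
| All : ty -> ty.

Definition O : ty := TConst 0.

Fixpoint tlift_by (n c : nat) (A : ty) : ty :=
  match A with
  | TVar i => if Nat.ltb i c then TVar i else TVar (i + n)
  | TConst a => TConst a
  | Arr B C => Arr (tlift_by n c B) (tlift_by n c C)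
  | All B => All (tlift_by n (S c) B)
  end.

Definition tlift (A : ty) : ty := tlift_by 1 0 A.

Fixpoint tsubst (k : nat) (C : ty) (A : ty) : ty :=
  match A with
  | TVar i => if Nat.ltb i k then TVar i
              else if Nat.eqb i k then tlift_by k 0 C
              else TVar (pred i)
  | TConst a => TConst a
  | Arr B D => Arr (tsubst k C B) (tsubst k C D)
  | All B => All (tsubst (S k) C B)
  end.

Fixpoint ty_occurs (k : nat) (A : ty) : Prop :=
  match A with
  | TVar i => i = k
  | TConst _ => False
  | Arr B C => ty_occurs k B \/ ty_occurs k C
  | All B => ty_occurs (S k) B
  end.

Definition closed_ty (A : ty) : Prop := forall k, ~ ty_occurs k A.

Fixpoint has_const (c : nat) (A : ty) : Prop :=
  match A with
  | TVar _ => False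
  | TConst a => a = c
  | Arr B C => has_const c B \/ has_const c C
  | All B => has_const c B
  end.

Definition contains_O (A : ty) : Prop := has_const 0 A.

Fixpoint proper (A : ty) : Prop :=
  match A with
  | TVar _ | TConst _ => True
  | Arr B C => proper B /\ proper C
  | All B => ty_occurs 0 B /\ proper B
  end.

(** typing in system F (only proper types are used); the side condition
    "X not free in Γ" of (∀i) is built into the de Bruijn formulation *)
Inductive typing : list ty -> term -> ty -> Prop :=
| ty_ax : forall G i A, nth_error G i = Some A -> typing G (Var i) A
| ty_arr_i : forall G t B C, proper B -> typing (B :: G) t C ->
    typing G (Lam t) (Arr B C)
| ty_arr_e : forall G u v B C, typing G u (Arr B C) -> typing G v B ->
    typing G (App u v) C
| ty_all_i : forall G t A, typing (map tlift G) t A -> typing G t (All A)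
| ty_all_e : forall G t A C, proper C -> typing G t (All A) ->
    typing G t (tsubst 0 C A).

Definition saturated (X : term -> Prop) : Prop :=
  forall u t, X u -> wh_red t u -> X t.

Definition arrow_set (X Y : term -> Prop) : term -> Prop :=
  fun u => forall t, X t -> Y (App u t).

Definition scons (X : term -> Prop) (rho : nat -> term -> Prop) :
  nat -> term -> Prop :=
  fun n => match n with 0 => X | S m => rho m end.

Fixpoint interp (rho kappa : nat -> term -> Prop) (A : ty) : term -> Prop :=
  match A with
  | TVar i => rho i
  | TConst a => kappa a
  | Arr B C => arrow_set (interp rho kappa B) (interp rho kappa C)
  | All B => fun u => forall X, saturated X -> interp (scons X rho) kappa B u
  end.

Definition real (A : ty) (u : term) : Prop :=
  forall rho kappa : nat -> term -> Prop,
    (forall n, saturated (rho n)) -> (forall a, saturated (kappa a)) ->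
    interp rho kappa A u.

Definition data_type (A : ty) : Prop :=
  closed_ty A /\ (exists t, real A t) /\
  (forall t, real A t -> exists t', beta_star t t' /\ closed_term t').

(* context α : O is [O]; α is de Bruijn index 0 *)
Definition output_type (S : ty) : Prop :=
  closed_ty S /\ ~ contains_O S /\
  (forall t, normal t -> typing [O] t S -> ~ occurs 0 t).

(* Main.v *)
Require Import Defs.
From Stdlib Require Import List Arith Lia Relations.
Import ListNotations.

Ltac ltac_dec := repeat match goal with
  | |- context [Nat.ltb ?a ?b] => destruct (Nat.ltb_spec a b)
  | |- context [Nat.eqb ?a ?b] => destruct (Nat.eqb_spec a b)
  end.

Lemma lift0 : forall t c, lift_by 0 c t = t.
Proof.
  induction t; intros c; simpl.
  - ltac_dec; f_equal; lia.
  - now rewrite IHt1, IHt2.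
  - now rewrite IHt.
Qed.

Lemma subst_lift : forall w k u, subst k u (lift_by 1 k w) = w.
Proof.
  induction w; intros k u; simpl.
  - destruct (Nat.ltb_spec n k); simpl.
    + destruct (Nat.ltb_spec n k); [reflexivity| lia].
    + ltac_dec; try lia. f_equal; lia.
  - now rewrite IHw1, IHw2.
  - now rewrite IHw.
Qed.

Lemma lift_lift : forall u k d c, d <= c -> c <= d + k ->
  lift_by 1 c (lift_by k d u) = lift_by (S k) d u.
Proof.
  induction u; intros k d c H1 H2; simpl.
  - destruct (Nat.ltb_spec n d); simpl.
    + destruct (Nat.ltb_spec n c); [reflexivity|lia].
    + destruct (Nat.ltb_spec (n + k) c); [lia|]. f_equal; lia.
  - now rewrite IHu1, IHu2.
  - rewrite IHu; auto; lia.
Qed.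

Lemma subst_lift_comm : forall w k c u, c <= k ->
  subst (S k) u (lift_by 1 c w) = lift_by 1 c (subst k u w).
Proof.
  induction w; intros k c u H; simpl.
  - destruct (Nat.ltb_spec n c); simpl.
    + destruct (Nat.ltb_spec n (S k)); [|lia].
      destruct (Nat.ltb_spec n k); [|lia]. simpl.
      destruct (Nat.ltb_spec n c); [reflexivity|lia].
    + destruct (Nat.ltb_spec (n+1) (S k)).
      * destruct (Nat.ltb_spec n k); [|lia]. simpl.
        destruct (Nat.ltb_spec n c); [lia|reflexivity].
      * destruct (Nat.ltb_spec n k); [lia|].
        destruct (Nat.eqb_spec (n+1) (S k)); destruct (Nat.eqb_spec n k); try lia.
        -- rewrite lift_lift; auto; lia.
        -- simpl. destruct (Nat.ltb_spec (pred n) c); [lia|]. f_equal; lia.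
  - now rewrite IHw1, IHw2.
  - rewrite IHw; auto; lia.
Qed.

Definition up (s : nat -> term) : nat -> term :=
  fun n => match n with 0 => Var 0 | S m => lift_by 1 0 (s m) end.

Fixpoint psubst (s : nat -> term) (t : term) : term :=
  match t with
  | Var i => s i
  | App a b => App (psubst s a) (psubst s b)
  | Lam a => Lam (psubst (up s) a)
  end.

Lemma psubst_ext : forall t s s', (forall i, s i = s' i) -> psubst s t = psubst s' t.
Proof.
  induction t; intros s s' H; simpl.
  - apply H.
  - now rewrite (IHt1 s s'), (IHt2 s s').
  - f_equal. apply IHt. intros [|i]; simpl; auto. now rewrite H.
Qed.

Lemma psubst_id : forall t, psubst Var t = t.
Proof.
  assert (forall t s, (forall i, s i = Var i) -> psubst s t = t).
  { induction t; intros s H; simpl.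
    - apply H.
    - now rewrite IHt1, IHt2.
    - f_equal. apply IHt. intros [|i]; simpl; auto. rewrite H. simpl. f_equal; lia. }
  intros; apply H; auto.
Qed.

Lemma subst_psubst : forall t s k u,
  subst k u (psubst s t) = psubst (fun i => subst k u (s i)) t.
Proof.
  induction t; intros s k u; simpl.
  - reflexivity.
  - now rewrite IHt1, IHt2.
  - f_equal. rewrite IHt. apply psubst_ext. intros [|i]; simpl; auto.
    rewrite subst_lift_comm; auto; lia.
Qed.

Definition tcons (u : term) (s : nat -> term) : nat -> term :=
  fun n => match n with 0 => u | S m => s m end.

Lemma key_subst : forall t s u,
  subst 0 u (psubst (up s) t) = psubst (tcons u s) t.
Proof.
  intros. rewrite subst_psubst. apply psubst_ext. intros [|i]; simpl.
  - apply lift0.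
  - apply subst_lift.
Qed.

Lemma ltb_SS : forall a b, (S a <? S b) = (a <? b). Proof. reflexivity. Qed.
Lemma eqb_SS : forall a b, (S a =? S b) = (a =? b). Proof. reflexivity. Qed.
Lemma interp_ext : forall A rho rho' kappa, (forall n u, rho n u <-> rho' n u) ->
  forall u, interp rho kappa A u <-> interp rho' kappa A u.
Proof.
  induction A; intros rho rho' kappa H u; simpl.
  - apply H.
  - tauto.
  - unfold arrow_set. split; intros Hu t Ht.
    + apply (IHA2 rho rho' kappa H). apply Hu. apply (IHA1 rho rho' kappa H). auto.
    + apply (IHA2 rho rho' kappa H). apply Hu. apply (IHA1 rho rho' kappa H). auto.
  - split; intros Hu X HX.
    + apply (IHA (scons X rho)). intros [|n] v; simpl; [tauto|apply H]. auto.
    + apply (IHA (scons X rho) (scons X rho')). intros [|n] v; simpl; [tauto|apply H]. auto.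
Qed.

Lemma interp_tlift : forall A n c rho kappa u,
  interp rho kappa (tlift_by n c A) u <->
  interp (fun i => if i <? c then rho i else rho (i+n)) kappa A u.
Proof.
  induction A; intros m c rho kappa u; simpl.
  - destruct (n <? c); simpl; tauto.
  - tauto.
  - unfold arrow_set. split; intros Hu t Ht.
    + apply IHA2. apply Hu. apply IHA1. auto.
    + apply IHA2. apply Hu. apply IHA1. auto.
  - split; intros Hu X HX.
    + apply (interp_ext _ (fun i => if i <? S c then scons X rho i else scons X rho (i + m))).
      * intros [|i] v; simpl; [tauto|]. rewrite ?ltb_SS. destruct (i <? c); tauto.
      * apply IHA. auto.
    + apply IHA. specialize (Hu X HX).
      apply (interp_ext _ (scons X (fun i => if i <? c then rho i else rho (i + m)))); auto.
      intros [|i] v; simpl; [tauto|]. rewrite ?ltb_SS. destruct (i <? c); tauto.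
Qed.

Lemma interp_tsubst : forall A k C rho kappa u,
  interp rho kappa (tsubst k C A) u <->
  interp (fun i => if i <? k then rho i else if i =? k then interp (fun j => rho (j+k)) kappa C else rho (pred i)) kappa A u.
Proof.
  induction A; intros k C rho kappa u; simpl.
  - destruct (n <? k); simpl; [tauto|]. destruct (n =? k); simpl; [|tauto].
    rewrite interp_tlift. apply interp_ext. intros j v. simpl. tauto.
  - tauto.
  - unfold arrow_set. split; intros Hu t Ht.
    + apply IHA2. apply Hu. apply IHA1. auto.
    + apply IHA2. apply Hu. apply IHA1. auto.
  - assert (E : forall X n v,
      (if n <? S k then scons X rho n else if n =? S k then interp (fun j => scons X rho (j + S k)) kappa C else scons X rho (pred n)) v <->
      scons X (fun i => if i <? k then rho i else if i =? k then interp (fun j => rho (j+k)) kappa C else rho (pred i)) n v).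
    { intros X [|i] v; simpl; [tauto|]. rewrite ?ltb_SS, ?eqb_SS.
      destruct (Nat.ltb_spec i k); [tauto|].
      destruct (Nat.eqb_spec i k).
      - apply interp_ext. intros j w. rewrite Nat.add_succ_r. simpl. tauto.
      - destruct i; [lia|]. simpl. tauto. }
    split; intros Hu X HX.
    + apply (interp_ext _ _ _ _ (E X)). apply IHA. auto.
    + apply IHA. apply (interp_ext _ _ _ _ (E X)). auto.
Qed.

Lemma interp_tsubst0 : forall A C rho kappa u,
  interp rho kappa (tsubst 0 C A) u <-> interp (scons (interp rho kappa C) rho) kappa A u.
Proof.
  intros. rewrite interp_tsubst. apply interp_ext. intros [|i] v; simpl; [|tauto].
  apply interp_ext. intros j w. rewrite Nat.add_0_r. tauto.
Qed.

Lemma interp_tlift1 : forall A X rho kappa u,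
  interp (scons X rho) kappa (tlift A) u <-> interp rho kappa A u.
Proof.
  intros. unfold tlift. rewrite interp_tlift. apply interp_ext.
  intros i v. simpl. rewrite Nat.add_1_r. simpl. tauto.
Qed.

Lemma wh_red_app : forall t u v, wh_red t u -> wh_red (App t v) (App u v).
Proof.
  intros t u v H. induction H.
  - apply rt_step. now constructor.
  - apply rt_refl.
  - eapply rt_trans; eauto.
Qed.

Lemma interp_sat : forall A rho kappa, (forall n, saturated (rho n)) ->
  (forall a, saturated (kappa a)) -> saturated (interp rho kappa A).
Proof.
  induction A; intros rho kappa Hr Hk; simpl.
  - apply Hr.
  - apply Hk.
  - intros u t Hu Ht v Hv. eapply IHA2; eauto. now apply wh_red_app.
  - intros u t Hu Ht X HX. eapply IHA; eauto. intros [|n]; simpl; auto.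
Qed.

Lemma adequacy : forall G t A, typing G t A ->
  forall rho kappa, (forall n, saturated (rho n)) -> (forall a, saturated (kappa a)) ->
  forall s, (forall i B, nth_error G i = Some B -> interp rho kappa B (s i)) ->
  interp rho kappa A (psubst s t).
Proof.
  intros G t A H. induction H; intros rho kappa Hr Hk s Hs; simpl.
  - now apply Hs.
  - intros v Hv.
    apply (interp_sat C rho kappa Hr Hk (subst 0 v (psubst (up s) t))).
    + rewrite key_subst. apply (IHtyping rho kappa Hr Hk (tcons v s)).
      intros [|i] B' Hi; simpl in *.
      * inversion Hi; subst; auto.
      * auto.
    + apply rt_step. constructor.
  - apply (IHtyping1 rho kappa Hr Hk s Hs). apply IHtyping2; auto.
  - intros X HX. apply IHtyping; auto.
    + intros [|n]; simpl; auto.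
    + intros i B Hi. rewrite nth_error_map in Hi.
      destruct (nth_error G i) eqn:E; simpl in Hi; inversion Hi; subst.
      apply interp_tlift1. auto.
  - apply interp_tsubst0. apply (IHtyping rho kappa Hr Hk s Hs).
    now apply interp_sat.
Qed.

Lemma interp_noO : forall A rho kappa kappa',
  (forall a, a <> 0 -> forall u, kappa a u <-> kappa' a u) -> ~ has_const 0 A ->
  forall u, interp rho kappa A u <-> interp rho kappa' A u.
Proof.
  induction A; intros rho kappa kappa' H HO u; simpl in *.
  - tauto.
  - apply H. auto.
  - unfold arrow_set. split; intros Hu t Ht.
    + apply (IHA2 rho kappa kappa' H); [tauto|]. apply Hu. apply (IHA1 rho kappa kappa' H); tauto.
    + apply (IHA2 rho kappa kappa' H); [tauto|]. apply Hu. apply (IHA1 rho kappa kappa' H); tauto.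
  - split; intros Hu X HX; apply (IHA _ kappa kappa' H HO); auto.
Qed.

Lemma beta1_redex : forall t t', beta1 t t' -> has_redex t.
Proof.
  intros t t' H. induction H; simpl; auto.
  - destruct a; simpl in *; auto.
  - destruct a; simpl in *; auto.
Qed.

Lemma normal_beta_star : forall x y, beta_star x y -> normal x -> y = x.
Proof.
  intros x y H. induction H; intros Hn; auto.
  - exfalso. apply Hn. eapply beta1_redex; eauto.
  - assert (y = x) by auto. subst. auto.
Qed.

Theorem theorem2p1p8 (A : ty) :
  proper A -> closed_ty A -> ~ contains_O A -> data_type A -> output_type A.
Proof.
  intros Hp Hc HO [_ [_ Hd]]. split; [auto|split; [auto|]].
  intros t Hn Ht Hocc.
  assert (Hr : real A t).
  { intros rho kappa Hrho Hk.
    set (kappa' := fun a => if a =? 0 then (fun _ : term => True) else kappa a).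
    assert (Hk' : forall a, saturated (kappa' a)).
    { intros a. unfold kappa'. destruct (a =? 0); auto. intros u v _ _. exact I. }
    assert (H := adequacy _ _ _ Ht rho kappa' Hrho Hk' Var).
    rewrite psubst_id in H.
    apply (interp_noO A rho kappa' kappa); auto.
    - intros a Ha u. unfold kappa'. destruct (Nat.eqb_spec a 0); [lia|tauto].
    - apply H. intros [|i] B Hi; simpl in Hi.
      + inversion Hi; subst. simpl. exact I.
      + destruct i; discriminate. }
  destruct (Hd t Hr) as [t' [Hb Hcl]].
  rewrite (normal_beta_star _ _ Hb Hn) in Hcl.
  exact (Hcl 0 Hocc).
Qed.
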